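(* Let $X_1,\dots,X_n$ be (possibly dependent) identically distributed component lifetimes with common distribution that of $X$, and let $\tau_1(\mathbf X)$ and $\tau_2(\mathbf X)$ be lifetimes of two coherent systems built on such components, with domination functions $h_1$ and $h_2$ respectively, i.e. $\bar F_{\tau_i(\mathbf X)}(x)=h_i(\bar F_X(x))$, $i=1,2$. Let $H_i(p)=p h_i'(p)/h_i(p)$, $p\in(0,1)$. Then $\tau_1(\mathbf X)\underset{c}{\prec}\tau_2(\mathbf X)$ (resp. $\tau_1(\mathbf X)\underset{c}{\succ}\tau_2(\mathbf X)$) if and only if $H_1(p)/H_2(p)$ is decreasing (resp. increasing) in $p\in(0,1)$.
   Context: All random variables are non-negative and absolutely continuous with support $[0,\infty)$. For a random variable $W$: density $f_W$, survival function $\bar F_W$, hazard rate $r_W=f_W/\bar F_W$. $U\underset{c}{\prec}V$ means $r_U(x)/r_V(x)$ is increasing in $x\ge0$; $U\underset{c}{\succ}V$ means $V\underset{c}{\prec}U$. The domination function $h:[0,1]\to[0,1]$ of a coherent system with identically distributed (possibly dependent) components is the function, depending on the structure and the survival copula, with system reliability $h(\bar F_X(x))$; it is increasing, continuous, $h(0)=0$, $h(1)=1$, assumed differentiable. ''Increasing'' means non-decreasing, ''decreasing'' means non-increasing. *)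

(* Defs.v *)
From Stdlib Require Import Reals.
From Coquelicot Require Import Coquelicot.
Open Scope R_scope.

(* Survival function Fbar_W(x) = P(W > x) of a non-negative absolutely
   continuous lifetime W with support [0, +oo), viewed as a function R -> R.
   The density is taken to be f_W = - Fbar_W' (derivative), assumed to exist
   and be positive at every x > 0 (so that the hazard rate and ratios of
   hazard rates are well defined there). *)
Definition lifetime_survival (S : R -> R) : Prop :=
  (forall x, x <= 0 -> S x = 1) /\
  (forall x, continuous S x) /\
  (forall x y, 0 <= x -> x < y -> S y < S x) /\
  is_lim S p_infty 0 /\
  (forall x, 0 < x -> ex_derive S x /\ Derive S x < 0).

Definition density (S : R -> R) (x : R) : R := - Derive S x.

Definition hazard (S : R -> R) (x : R) : R := density S x / S x.

(* Domination function h : [0,1] -> [0,1] (only its values on [0,1] matter):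
   increasing, continuous, h 0 = 0, h 1 = 1, differentiable (on (0,1)). *)
Definition domination_function (h : R -> R) : Prop :=
  h 0 = 0 /\ h 1 = 1 /\
  (forall p q, 0 <= p -> p <= q -> q <= 1 -> h p <= h q) /\
  (forall p, 0 <= p <= 1 ->
     filterlim h (within (fun y => 0 <= y <= 1) (locally p)) (locally (h p))) /\
  (forall p, 0 < p < 1 -> ex_derive h p).

Definition Hfun (h : R -> R) (p : R) : R := p * Derive h p / h p.

Definition c_prec (SU SV : R -> R) : Prop :=
  forall x y, 0 < x -> x <= y -> hazard SU x / hazard SV x <= hazard SU y / hazard SV y.

Definition incr_01 (g : R -> R) : Prop := forall p q, 0 < p -> p <= q -> q < 1 -> g p <= g q.
Definition decr_01 (g : R -> R) : Prop := forall p q, 0 < p -> p <= q -> q < 1 -> g q <= g p.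

(* Main.v *)
Require Import Defs.
From Stdlib Require Import Reals Lra.
From Coquelicot Require Import Coquelicot.
Open Scope R_scope.

Lemma lim_small (F : R -> R) : is_lim F p_infty 0 ->
  forall e, 0 < e -> exists M, forall y, M < y -> Rabs (F y) < e.
Proof.
  intros Hl e He. apply is_lim_spec in Hl.
  destruct (Hl (mkposreal e He)) as [M HM]. exists M. intros y Hy.
  specialize (HM y Hy). simpl in HM. rewrite Rminus_0_r in HM. exact HM.
Qed.

Lemma F_range F : lifetime_survival F -> forall x, 0 < x -> 0 < F x < 1.
Proof.
  intros [H0 [Hc [Hd [Hl Hder]]]] x Hx. split.
  - destruct (Rlt_or_le 0 (F (x+1))) as [Hp|Hp].
    + assert (F (x+1) < F x) by (apply Hd; lra). lra.
    + exfalso. assert (F (x+2) < F (x+1)) by (apply Hd; lra).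
      destruct (lim_small F Hl (- F (x+2))) as [M HM]; [lra|].
      set (y := Rmax M (x+2) + 1).
      assert (M < y) by (unfold y; generalize (Rmax_l M (x+2)); lra).
      assert (x + 2 < y) by (unfold y; generalize (Rmax_r M (x+2)); lra).
      specialize (HM y H1). assert (F y < F (x+2)) by (apply Hd; lra).
      apply Rabs_def2 in HM. lra.
  - rewrite <- (H0 0) by lra. apply Hd; lra.
Qed.

Lemma F_surj F : lifetime_survival F -> forall p, 0 < p < 1 -> exists x, 0 < x /\ F x = p.
Proof.
  intros HF p Hp. destruct HF as [H0 [Hc [Hd [Hl Hder]]]].
  destruct (lim_small F Hl p) as [M HM]; [lra|].
  set (b := Rmax M 0 + 1).
  assert (M < b) by (unfold b; generalize (Rmax_l M 0); lra).
  assert (0 < b) by (unfold b; generalize (Rmax_r M 0); lra).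
  specialize (HM b H). apply Rabs_def2 in HM.
  assert (Hcont : continuity (fun t => p - F t)).
  { intro t. apply continuity_pt_minus.
    apply continuity_pt_const. intros u v; reflexivity.
    apply continuity_pt_filterlim. apply Hc. }
  destruct (IVT (fun t => p - F t) 0 b Hcont H1) as [z [Hz Hfz]].
  - rewrite H0 by lra. lra.
  - lra.
  - exists z. assert (z <> 0). { intro; subst z. rewrite H0 in Hfz; lra. }
    split; lra.
Qed.

Lemma h_pos h : domination_function h -> (forall p, 0 < p < 1 -> 0 < Derive h p) ->
  forall p, 0 < p < 1 -> 0 < h p.
Proof.
  intros [H0 [H1 [Hm _]]] Hd p Hp.
  assert (0 <= h p) by (rewrite <- H0; apply Hm; lra).
  destruct (Rle_lt_or_eq_dec 0 (h p) H) as [|E]; [assumption|exfalso].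
  assert (Derive h (p/2) = Derive (fun _ => 0) (p/2)).
  { apply Derive_ext_loc. assert (Hr : 0 < p/2) by lra.
    exists (mkposreal _ Hr). intros t Ht. change (Rabs (t - p/2) < p/2) in Ht.
    apply Rabs_def2 in Ht.
    assert (h 0 <= h t) by (apply Hm; lra). assert (h t <= h p) by (apply Hm; lra).
    lra. }
  rewrite Derive_const in H2. specialize (Hd (p/2)). rewrite H2 in Hd. lra.
Qed.

Lemma ratio_eq F ha hb : lifetime_survival F ->
  domination_function ha -> domination_function hb ->
  (forall p, 0 < p < 1 -> 0 < Derive ha p) ->
  (forall p, 0 < p < 1 -> 0 < Derive hb p) ->
  forall x, 0 < x ->
  hazard (fun x => ha (F x)) x / hazard (fun x => hb (F x)) x
  = Hfun ha (F x) / Hfun hb (F x).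
Proof.
  intros HF Ha Hb Hda Hdb x Hx.
  assert (Hr := F_range F HF x Hx).
  assert (Hpa := h_pos ha Ha Hda _ Hr). assert (Hpb := h_pos hb Hb Hdb _ Hr).
  assert (Dpa := Hda _ Hr). assert (Dpb := Hdb _ Hr).
  destruct HF as [_ [_ [_ [_ Hder]]]]. destruct (Hder x Hx) as [Ex Dx].
  unfold hazard, density, Hfun.
  rewrite (Derive_comp ha F x); [|apply Ha; lra|assumption].
  rewrite (Derive_comp hb F x); [|apply Hb; lra|assumption].
  field. repeat split; lra.
Qed.

Lemma main_dir F ha hb : lifetime_survival F ->
  domination_function ha -> domination_function hb ->
  (forall p, 0 < p < 1 -> 0 < Derive ha p) ->
  (forall p, 0 < p < 1 -> 0 < Derive hb p) ->
  (c_prec (fun x => ha (F x)) (fun x => hb (F x)) <-> decr_01 (fun p => Hfun ha p / Hfun hb p)).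
Proof.
  intros HF Ha Hb Hda Hdb. unfold c_prec, decr_01. split.
  - intros Hc p q Hp Hpq Hq.
    destruct (F_surj F HF q) as [x [Hx Fx]]; [lra|].
    destruct (F_surj F HF p) as [y [Hy Fy]]; [lra|].
    assert (x <= y).
    { destruct (Rle_or_lt x y) as [|Hlt]; [assumption|].
      destruct HF as [_ [_ [Hd _]]]. assert (F x < F y) by (apply Hd; lra). lra. }
    specialize (Hc x y Hx H).
    rewrite !(ratio_eq F ha hb HF Ha Hb Hda Hdb) in Hc by lra.
    rewrite Fx, Fy in Hc. exact Hc.
  - intros Hd x y Hx Hxy.
    rewrite !(ratio_eq F ha hb HF Ha Hb Hda Hdb) by lra.
    assert (Rx := F_range F HF x Hx). assert (Ry := F_range F HF y ltac:(lra)).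
    apply Hd; try lra.
    destruct (Rle_lt_or_eq_dec x y Hxy) as [Hlt|E].
    + destruct HF as [_ [_ [Hd' _]]]. left; apply Hd'; lra.
    + subst; lra.
Qed.

Lemma Hfun_pos h : domination_function h ->
  (forall p, 0 < p < 1 -> 0 < Derive h p) -> forall p, 0 < p < 1 -> 0 < Hfun h p.
Proof.
  intros Hh Hd p Hp. unfold Hfun. assert (Hpos := h_pos h Hh Hd p Hp).
  assert (Hdp := Hd p Hp).
  apply Rdiv_lt_0_compat; [apply Rmult_lt_0_compat|]; lra.
Qed.

Lemma swap_div a b c d : 0 < a -> 0 < b -> 0 < c -> 0 < d -> a / b <= c / d -> d / c <= b / a.
Proof.
  intros Ha Hb Hc Hd H.
  assert (E : a * d <= c * b).
  { apply (Rmult_le_compat_r (b * d)) in H; [|nra].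
    replace (a / b * (b * d)) with (a * d) in H by (field; lra).
    replace (c / d * (b * d)) with (c * b) in H by (field; lra). lra. }
  apply (Rmult_le_reg_r (a * c)); [nra|].
  replace (d / c * (a * c)) with (a * d) by (field; lra).
  replace (b / a * (a * c)) with (c * b) by (field; lra). lra.
Qed.

Theorem proposition3p1 (FbarX h1 h2 : R -> R) :
  lifetime_survival FbarX ->
  domination_function h1 ->
  domination_function h2 ->
  (forall p, 0 < p < 1 -> 0 < Derive h1 p) ->
  (forall p, 0 < p < 1 -> 0 < Derive h2 p) ->
  let Fbar_tau1 := fun x => h1 (FbarX x) in
  let Fbar_tau2 := fun x => h2 (FbarX x) in
  (c_prec Fbar_tau1 Fbar_tau2 <-> decr_01 (fun p => Hfun h1 p / Hfun h2 p)) /\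
  (c_prec Fbar_tau2 Fbar_tau1 <-> incr_01 (fun p => Hfun h1 p / Hfun h2 p)).
Proof.
  intros HF H1 H2 D1 D2 T1 T2. unfold T1, T2. split.
  - apply main_dir; assumption.
  - rewrite (main_dir FbarX h2 h1 HF H2 H1 D2 D1).
    unfold decr_01, incr_01.
    split; intros Hm p q Hp Hpq Hq; specialize (Hm p q Hp Hpq Hq);
    apply swap_div; auto using Hfun_pos with real; try (apply Hfun_pos; auto; lra).
Qed.
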